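(* Assume the Low-Rank MDP satisfies $\eta$-reachability for some $\eta>0$. Fix $h\in[H-1]$, $C\ge1$, $\varepsilon\le\eta/2$. Let $\Psi=\{\pi_1,\dots,\pi_d\}\subseteq\Pi_{\mathrm{M}}$ be such that $\{\phi^{\star,\pi_i}_h\}_{i\in[d]}$ is a $(C,\varepsilon)$-approximate barycentric spanner for $\mathcal{W}_h=\{\phi^{\star,\pi}_h:\pi\in\Pi_{\mathrm{M}}\}$. Then $\Psi$ is a $(\frac{1}{2dC},0)$-policy cover for layer $h+1$, i.e. $\max_{\pi\in\Psi}d^\pi(x)\ge\frac{1}{2dC}\sup_{\pi'\in\Pi_{\mathrm{M}}}d^{\pi'}(x)$ for every $x\in\mathcal{X}_{h+1}$.
   Context: Setting (Low-Rank MDP). Fix horizon $H\in\mathbb{N}$, dimension $d\in\mathbb{N}$, a finite action set $\mathcal{A}$ with $|\mathcal{A}|=A$, and a measurable state space $\mathcal{X}=\mathcal{X}_1\sqcup\cdots\sqcup\mathcal{X}_H$ (disjoint layers) carrying a $\sigma$-finite measure $\nu$. The MDP $\mathcal{M}$ has an initial distribution $\rho$ on $\mathcal{X}_1$ and, for each $h\in[H-1]$, measurable maps $\phi^\star_h:\mathcal{X}_h\times\mathcal{A}\to\mathbb{R}^d$ and $\mu^\star_{h+1}:\mathcal{X}_{h+1}\to\mathbb{R}^d$ such that for every $(x,a)\in\mathcal{X}_h\times\mathcal{A}$ the function $x'\mapsto\mu^\star_{h+1}(x')^\top\phi^\star_h(x,a)$ is a probability density w.r.t. $\nu$ on $\mathcal{X}_{h+1}$;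 this density is the transition kernel $T_h(\cdot\mid x,a)$. $\Pi_{\mathrm{M}}$ denotes the set of randomized Markov policies $\pi:\mathcal{X}\to\Delta(\mathcal{A})$; an episode under $\pi$ draws $x_1\sim\rho$, $a_h\sim\pi(x_h)$, $x_{h+1}\sim T_h(\cdot\mid x_h,a_h)$, and $\mathbb{P}^\pi,\mathbb{E}^\pi$ denote the law and expectation of the trajectory. For $h\ge2$ and $x\in\mathcal{X}_h$, $d^\pi(x)$ denotes the density w.r.t. $\nu$ of the law of $x_h$ under $\pi$ (so $d^\pi(x)=\mu^\star_h(x)^\top\mathbb{E}^\pi[\phi^\star_{h-1}(x_{h-1},a_{h-1})]$). Normalization: $\|\phi^\star_h(x,a)\|\le 1$ for all $h,x,a$, and $\|\int_{\mathcal{X}_h}\mu^\star_h(x)g(x)\,d\nu(x)\|\le\sqrt d$ for every measurable $g:\mathcal{X}_h\to[0,1]$. Here $\|\cdot\|$ is the Euclidean norm. Notation: $\phi^{\star,\pi}_h:=\mathbb{E}^\pi[\phi^\star_h(x_h,a_h)]$. $\eta$-reachability: for all $h\in\{2,\dots,H\}$ and $x\in\mathcal{X}_h$, $\sup_{\pi\in\Pi_{\mathrm{M}}}d^\pi(x)\ge\eta\|\mu^\star_h(x)\|$. Barycentric spanner: given $\mathcal{W}\subseteq\mathbb{R}^d$ spanning $\mathbb{R}^d$, $\{w_1,\dots,w_d\}\subseteq\mathcal{W}$ is a $(C,\varepsilon)$-approximate barycentric spanner for $\mathcal{W}$ if for every $w\in\mathcal{W}$ there are $\beta_1,\dots,\beta_d\in[-C,C]$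 with $\|w-\sum_i\beta_iw_i\|\le\varepsilon$. *)

(* Defs.v *)
From HB Require Import structures.
From mathcomp Require Import all_boot all_order all_algebra.
From mathcomp Require Import all_classical all_reals all_analysis.

Set Implicit Arguments.
Unset Strict Implicit.
Unset Printing Implicit Defensive.

Import Order.TTheory GRing.Theory Num.Theory.
Import numFieldNormedType.Exports.

Local Open Scope classical_set_scope.
Local Open Scope ring_scope.

Definition dotv {R : pzRingType} {d : nat} (u v : 'rV[R]_d) : R :=
  \sum_(i < d) u 0 i * v 0 i.

Definition enorm {R : rcfType} {d : nat} (v : 'rV[R]_d) : R :=
  Num.sqrt (\sum_(i < d) v 0 i ^+ 2).

(* Data of a low-rank MDP over a common measurable state space T
   (layer h of the paper's layered space is represented by the time index h).
   nu : reference sigma-finite measure, rho : initial distribution,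
   phi h x a = phi*_h(x,a),  mu h x = mu*_h(x). *)
Record lrmdp (R : realType) (dT : measure_display) (T : measurableType dT)
    (A : finType) (d : nat) := LRMDP {
  nu  : {measure set T -> \bar R};
  rho : probability T R;
  phi : nat -> T -> A -> 'rV[R]_d;
  mu  : nat -> T -> 'rV[R]_d
}.

Section LowRank.
Context {R : realType} {dT : measure_display} {T : measurableType dT}
  {A : finType} {d : nat}.

Definition markov_policy (pi : nat -> T -> A -> R) : Prop :=
  (forall h x a, 0 <= pi h x a) /\
  (forall h x, \sum_(a : A) pi h x a = 1) /\
  (forall h a, measurable_fun setT (fun x => pi h x a)).

(* featocc M pi h = phi*^{pi}_h = E^pi[phi*_h(x_h, a_h)], computed layer by
   layer: x_1 ~ rho, and for h >= 2 the law of x_h has density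
   d^pi(x) = mu*_h(x)^T E^pi[phi*_{h-1}(x_{h-1}, a_{h-1})] w.r.t. nu. *)
Fixpoint featocc (M : @lrmdp R dT T A d) (pi : nat -> T -> A -> R) (h : nat)
    : 'rV[R]_d :=
  match h with
  | 0 => 0
  | S h' =>
    match h' with
    | 0 => \row_(i < d) Rintegral (rho M) setT
                          (fun x => \sum_(a : A) pi 1%N x a * phi M 1%N x a 0 i)
    | S _ => \row_(i < d) Rintegral (nu M) setT
                (fun x => \sum_(a : A) pi h x a * phi M h x a 0 i
                           * dotv (mu M h x) (featocc M pi h'))
    end
  end.

(* d^pi(x) for x in layer h >= 2 : density of the law of x_h w.r.t. nu. *)
Definition occ_dens (M : @lrmdp R dT T A d) (pi : nat -> T -> A -> R) (h : nat)
    (x : T) : R :=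
  dotv (mu M h x) (featocc M pi h.-1).

Definition is_lowrank_mdp (H : nat) (M : @lrmdp R dT T A d) : Prop :=
  sigma_finite setT (nu M) /\
  (forall h, (1 <= h <= H.-1)%N -> forall a (i : 'I_d),
      measurable_fun setT (fun x => phi M h x a 0 i)) /\
  (forall h, (2 <= h <= H)%N -> forall i : 'I_d,
      measurable_fun setT (fun x => mu M h x 0 i)) /\
  (forall h, (1 <= h <= H.-1)%N -> forall x a,
      (forall x', 0 <= dotv (mu M h.+1 x') (phi M h x a)) /\
      (\int[nu M]_(x' in setT) (dotv (mu M h.+1 x') (phi M h x a))%:E = 1)%E) /\
  (forall h, (1 <= h <= H.-1)%N -> forall x a, enorm (phi M h x a) <= 1) /\
  (forall h, (2 <= h <= H)%N -> forall g : T -> R,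
      measurable_fun setT g -> (forall x, 0 <= g x <= 1) ->
      enorm (\row_(i < d) Rintegral (nu M) setT (fun x => mu M h x 0 i * g x))
        <= Num.sqrt d%:R).

Definition eta_reachable (H : nat) (M : @lrmdp R dT T A d) (eta : R) : Prop :=
  forall h, (2 <= h <= H)%N -> forall x : T,
    (ereal_sup [set (occ_dens M pi h x)%:E | pi in markov_policy]
       >= (eta * enorm (mu M h x))%:E)%E.

Definition feat_set (M : @lrmdp R dT T A d) (h : nat) : set 'rV[R]_d :=
  [set featocc M pi h | pi in markov_policy].

Definition spans (W : set 'rV[R]_d) : Prop :=
  forall v : 'rV[R]_d, exists (n : nat) (ws : 'I_n -> 'rV[R]_d) (c : 'I_n -> R),
    (forall j, W (ws j)) /\ v = \sum_(j < n) c j *: ws j.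

Definition approx_bspanner (W : set 'rV[R]_d) (w : 'I_d -> 'rV[R]_d)
    (C eps : R) : Prop :=
  spans W /\ (forall i, W (w i)) /\
  forall v, W v -> exists beta : 'I_d -> R,
    (forall i, - C <= beta i <= C) /\
    enorm (v - \sum_(i < d) beta i *: w i) <= eps.

End LowRank.

(* Main.v *)
Require Import Defs.
From HB Require Import structures.
From mathcomp Require Import all_boot all_order all_algebra.
From mathcomp Require Import all_classical all_reals all_analysis.
From mathcomp Require Import measurable_realfun ring lra zify.

Import Order.TTheory GRing.Theory Num.Theory.
Import numFieldNormedType.Exports.

Local Open Scope classical_set_scope.
Local Open Scope ring_scope.

Section Ton.
Local Open Scope ereal_scope.
Context d1 d2 (T1 : measurableType d1) (T2 : measurableType d2) (R : realType).
Variables (m1 : {measure set T1 -> \bar R}) (m2 : {measure set T2 -> \bar R}).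
Hypotheses (h1 : sigma_finite setT m1) (h2 : sigma_finite setT m2).
Let m1' : set T1 -> \bar R := m1.
Let m2' : set T2 -> \bar R := m2.
HB.instance Definition _ := Measure.on m1'.
HB.instance Definition _ := Measure.on m2'.
HB.instance Definition _ := Measure_isSigmaFinite.Build _ _ _ m1' h1.
HB.instance Definition _ := Measure_isSigmaFinite.Build _ _ _ m2' h2.
Lemma tonelli_gen (f : (T1 * T2)%type -> \bar R) :
  measurable_fun [set: (T1 * T2)%type] f -> (forall x, 0 <= f x) ->
  \int[m1]_x \int[m2]_y f (x, y) = \int[m2]_y \int[m1]_x f (x, y).
Proof. move=> mf f0; exact: (@fubini_tonelli _ _ _ _ _ m1' m2'). Qed.
End Ton.

Section Aux.
Context {R : realType} {d : nat}.

Lemma norm_coord (v : 'rV[R]_d) i : `|v 0 i| <= enorm v.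
Proof.
rewrite /enorm -sqrtr_sqr; apply: ler_wsqrtr.
rewrite (bigD1 i) //= lerDl; apply: sumr_ge0 => j _; exact: sqr_ge0.
Qed.

Lemma enorm_ge0 (v : 'rV[R]_d) : 0 <= enorm v.
Proof. exact: sqrtr_ge0. Qed.

Lemma cauchy_schwarz (u v : 'rV[R]_d) : dotv u v <= enorm u * enorm v.
Proof.
set a := enorm u; set b := enorm v.
have Su : a ^+ 2 = \sum_(i < d) u 0 i ^+ 2.
  by rewrite /a /enorm sqr_sqrtr // sumr_ge0 // => i _; exact: sqr_ge0.
have Sv : b ^+ 2 = \sum_(i < d) v 0 i ^+ 2.
  by rewrite /b /enorm sqr_sqrtr // sumr_ge0 // => i _; exact: sqr_ge0.
have h : 0 <= \sum_(i < d) (b * u 0 i - a * v 0 i) ^+ 2.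
  by apply: sumr_ge0 => i _; exact: sqr_ge0.
have E : \sum_(i < d) (b * u 0 i - a * v 0 i) ^+ 2 =
   b ^+ 2 * (\sum_(i < d) u 0 i ^+ 2) - 2 * a * b * dotv u v + a ^+ 2 * (\sum_(i < d) v 0 i ^+ 2).
  rewrite /dotv !mulr_sumr -sumrB -big_split /=.
  by apply: eq_bigr => i _; ring.
rewrite E -Su -Sv in h.
have a0 : 0 <= a by exact: enorm_ge0.
have b0 : 0 <= b by exact: enorm_ge0.
have [ab0|] := ltrP 0 (a * b); first by nra.
rewrite le_eqVlt => /orP[/eqP ab| ]; last by rewrite ltNge mulr_ge0.
have [a00|b00] : a = 0 \/ b = 0.
  by move/eqP: ab; rewrite mulf_eq0 => /orP[/eqP|/eqP]; [left|right].
- have uz : forall i, u 0 i = 0.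
    move=> i; apply/eqP; rewrite -sqrf_eq0; apply/eqP.
    move/esym: Su; rewrite a00 expr0n /= => /eqP; rewrite psumr_eq0; last by move=> *; exact: sqr_ge0.
    by move=> /allP /(_ i (mem_index_enum _)) /eqP.
  rewrite ab /dotv big1 // => i _; by rewrite uz mul0r.
- have vz : forall i, v 0 i = 0.
    move=> i; apply/eqP; rewrite -sqrf_eq0; apply/eqP.
    move/esym: Sv; rewrite b00 expr0n /= => /eqP; rewrite psumr_eq0; last by move=> *; exact: sqr_ge0.
    by move=> /allP /(_ i (mem_index_enum _)) /eqP.
  rewrite ab /dotv big1 // => i _; by rewrite vz mulr0.
Qed.
End Aux.
Section Step.
Context {R : realType} {dT : measure_display} {T : measurableType dT}
  {A : finType} {d : nat}.
Variable M : @lrmdp R dT T A d.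

Lemma step (m0 : {measure set T -> \bar R}) (sf0 : sigma_finite setT m0)
  (sfn : sigma_finite setT (nu M)) (k : nat) (pi : nat -> T -> A -> R) (w : T -> R)
  (mphi : forall a (i : 'I_d), measurable_fun setT (fun x => phi M k x a 0 i))
  (mmu : forall i : 'I_d, measurable_fun setT (fun y => mu M k.+1 y 0 i))
  (dens : forall x a, (forall y, 0 <= dotv (mu M k.+1 y) (phi M k x a)) /\
      (\int[nu M]_(y in setT) (dotv (mu M k.+1 y) (phi M k x a))%:E = 1)%E)
  (nphi : forall x a, enorm (phi M k x a) <= 1)
  (hpi : markov_policy pi) (mw : measurable_fun setT w) (w0 : forall x, 0 <= w x)
  (iw : (\int[m0]_(x in setT) (w x)%:E = 1)%E) :
  let v := \row_(i < d) Rintegral m0 setT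
      (fun x => \sum_(a : A) pi k x a * phi M k x a 0 i * w x) in
  [/\ measurable_fun setT (fun y => dotv (mu M k.+1 y) v),
      (forall y, 0 <= dotv (mu M k.+1 y) v) &
      (\int[nu M]_(y in setT) (dotv (mu M k.+1 y) v)%:E = 1)%E].
Proof.
move=> v.
set f := fun (i : 'I_d) x => \sum_(a : A) pi k x a * phi M k x a 0 i * w x.
have [pi0 [pi1 pim]] := hpi.
have mf : forall i, measurable_fun setT (f i).
  move=> i; apply: measurable_sum => a.
  by apply: measurable_funM; [apply: measurable_funM|].
have fle : forall i x, `|f i x| <= w x.
  move=> i x; rewrite /f.
  apply: (le_trans (ler_norm_sum _ _ _)).
  apply: (@le_trans _ _ (\sum_(a : A) pi k x a * w x)); last first.
    by rewrite -mulr_suml pi1 mul1r.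
  apply: ler_sum => a _.
  rewrite normrM normrM (ger0_norm (pi0 _ _ _)) (ger0_norm (w0 x)).
  apply: ler_wpM2r; first exact: w0.
  rewrite -[X in _ <= X]mulr1; apply: ler_wpM2l; first exact: pi0.
  exact: le_trans (norm_coord _ _) (nphi x a).
have iwI : m0.-integrable setT (EFin \o w).
  apply/integrableP; split; first exact/measurable_EFinP.
  under eq_integral => x _ do rewrite /= ger0_norm ?(w0 x) //.
  by rewrite iw ltry.
have intf : forall i, m0.-integrable setT (EFin \o f i).
  move=> i; apply: le_integrable iwI => //=; first exact/measurable_EFinP.
  by move=> x _ /=; rewrite lee_fin (ger0_norm (w0 x)) fle.
set K := fun y x => \sum_(a : A) pi k x a * dotv (mu M k.+1 y) (phi M k x a) * w x.
have KE : forall y x, K y x = \sum_(i < d) mu M k.+1 y 0 i * f i x.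
  move=> y x; rewrite /K /f /dotv.
  under [RHS]eq_bigr do rewrite mulr_sumr.
  rewrite exchange_big /=; apply: eq_bigr => a _.
  rewrite mulr_sumr mulr_suml; apply: eq_bigr => i _; ring.
have K0 : forall y x, 0 <= K y x.
  move=> y x; apply: sumr_ge0 => a _.
  by apply: mulr_ge0; [apply: mulr_ge0; [exact: pi0|exact: (dens x a).1]|exact: w0].
have gE : forall y, (dotv (mu M k.+1 y) v)%:E = (\int[m0]_(x in setT) (K y x)%:E)%E.
  move=> y; under eq_integral do rewrite KE -sumEFin.
  rewrite integral_sum //; last first.
    by move=> i; under eq_fun do rewrite EFinM; exact: (integrableZl measurableT _ (intf i)).
  rewrite /dotv -sumEFin; apply: eq_bigr => i _.
  under eq_integral do rewrite EFinM.
  rewrite integralZl //; last exact: (intf i).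
  rewrite /v mxE EFinM /Rintegral fineK //.
  exact: (integrable_fin_num measurableT (intf i)).
split.
- rewrite /dotv; apply: measurable_sum => i.
  by apply: measurable_funM => //; exact: measurable_cst.
- by move=> y; rewrite -lee_fin gE; apply: integral_ge0 => x _; rewrite lee_fin.
under eq_integral do rewrite gE.
have mK : measurable_fun [set: (T * T)%type] (fun p => (K p.1 p.2)%:E).
  apply/measurable_EFinP; rewrite /K; apply: measurable_sum => a.
  apply: measurable_funM; [apply: measurable_funM|].
  + exact: (measurableT_comp (pim k a) measurable_snd).
  + rewrite /dotv; apply: measurable_sum => i.
    apply: measurable_funM.
    * exact: (measurableT_comp (mmu i) measurable_fst).
    * exact: (measurableT_comp (mphi a i) measurable_snd).
  + exact: (measurableT_comp mw measurable_snd).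
rewrite (@tonelli_gen _ _ _ _ _ (nu M) m0 sfn sf0 _ mK); last by move=> p; rewrite lee_fin.
rewrite -iw; apply: eq_integral => x _ /=.
rewrite /K; under eq_integral do rewrite -sumEFin.
rewrite ge0_integral_sum //; last first.
  - move=> a y _; rewrite lee_fin.
    by apply: mulr_ge0; [apply: mulr_ge0; [exact: pi0|exact: (dens x a).1]|exact: w0].
  - move=> a; apply/measurable_EFinP.
    apply: measurable_funM; [apply: measurable_funM|] => //; try exact: measurable_cst.
    rewrite /dotv; apply: measurable_sum => i.
    by apply: measurable_funM => //; exact: measurable_cst.
transitivity (\sum_(a : A) ((pi k x a * w x)%:E))%E; last first.
  by rewrite sumEFin -mulr_suml pi1 mul1r.
apply: eq_bigr => a _.
transitivity (\int[nu M]_(y in setT) ((pi k x a * w x)%:E * (dotv (mu M k.+1 y) (phi M k x a))%:E))%E.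
  by apply: eq_integral => y _; rewrite -EFinM; congr EFin; ring.
rewrite ge0_integralZl_EFin //.
- by rewrite (dens x a).2 mule1.
- by move=> y _; rewrite lee_fin (dens x a).1.
- apply/measurable_EFinP; rewrite /dotv; apply: measurable_sum => i.
  by apply: measurable_funM => //; exact: measurable_cst.
- by apply: mulr_ge0; [exact: pi0|exact: w0].
Qed.
End Step.
Section Main.
Context {R : realType} {dT : measure_display} {T : measurableType dT}
  {A : finType} {d : nat}.

Lemma dens_all (H : nat) (M : @lrmdp R dT T A d) : is_lowrank_mdp H M ->
  forall k, (1 <= k <= H.-1)%N -> forall pi, markov_policy pi ->
  [/\ measurable_fun setT (fun y => dotv (mu M k.+1 y) (featocc M pi k)),
      (forall y, 0 <= dotv (mu M k.+1 y) (featocc M pi k)) &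
      (\int[nu M]_(y in setT) (dotv (mu M k.+1 y) (featocc M pi k))%:E = 1)%E].
Proof.
case=> [sfn [mphi [mmu [dens [nphi _]]]]].
elim=> [//|k IH] hk pi hpi.
have hk1 : (2 <= k.+2 <= H)%N by move: hk; lia.
case: k IH hk hk1 => [|j] IH hk hk1.
- have E : featocc M pi 1 = \row_(i < d) Rintegral (rho M) setT
      (fun x => \sum_(a : A) pi 1%N x a * phi M 1 x a 0 i * (fun _ => 1) x).
    by apply/rowP => i; rewrite !mxE; apply: eq_Rintegral => x _ /=; apply: eq_bigr => a _; rewrite mulr1.
  rewrite E.
  apply: (@step _ _ _ _ _ M (rho M)) => //.
  + apply: fin_num_fun_sigma_finite; first by rewrite measure0 ltry.
    exact: fin_num_measure.
  + by move=> a i; apply: mphi.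
  + by move=> i; apply: mmu.
  + by move=> x a; apply: dens.
  + by move=> x a; apply: nphi.
  + by rewrite integral_cst //= probability_setT mul1e.
- have hj : (1 <= j.+1 <= H.-1)%N by move: hk; lia.
  have [mw w0 iw] := IH hj pi hpi.
  have E : featocc M pi j.+2 = \row_(i < d) Rintegral (nu M) setT
      (fun x => \sum_(a : A) pi j.+2 x a * phi M j.+2 x a 0 i *
         (fun y => dotv (mu M j.+2 y) (featocc M pi j.+1)) x) by [].
  rewrite E.
  apply: (@step _ _ _ _ _ M (nu M)) => //.
  + by move=> a i; apply: mphi.
  + by move=> i; apply: mmu.
  + by move=> x a; apply: dens.
  + by move=> x a; apply: nphi.
Qed.

Lemma dotvD (u v1 v2 : 'rV[R]_d) : dotv u (v1 + v2) = dotv u v1 + dotv u v2.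
Proof. by rewrite /dotv -big_split; apply: eq_bigr => i _; rewrite mxE mulrDr. Qed.

Lemma dotv_sum (u : 'rV[R]_d) (b : 'I_d -> R) (w : 'I_d -> 'rV[R]_d) :
  dotv u (\sum_(j < d) b j *: w j) = \sum_(j < d) b j * dotv u (w j).
Proof.
rewrite /dotv; under eq_bigr do rewrite summxE mulr_sumr.
rewrite exchange_big /=; apply: eq_bigr => j _; rewrite mulr_sumr.
by apply: eq_bigr => i _; rewrite mxE; ring.
Qed.
End Main.

Theorem mainTheorem3 (R : realType) (dT : measure_display) (T : measurableType dT)
  (A : finType) (d H : nat) (M : @lrmdp R dT T A d) (eta : R)
  (h : nat) (C eps : R) (Psi : 'I_d -> (nat -> T -> A -> R)) :
  is_lowrank_mdp H M ->
  0 < eta -> eta_reachable H M eta ->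
  (1 <= h <= H.-1)%N -> 1 <= C -> eps <= eta / 2 ->
  (forall i, markov_policy (Psi i)) ->
  approx_bspanner (feat_set M h) (fun i => featocc M (Psi i) h) C eps ->
  forall x : T,
    (\big[Order.max/-oo]_(i < d) (occ_dens M (Psi i) h.+1 x)%:E
      >= ((2 * d%:R * C)^-1)%:E *
         ereal_sup [set (occ_dens M pi h.+1 x)%:E | pi in markov_policy])%E.
Proof.
move=> hM eta0 reach hh C1 epsle hPsi [_ [_ hbary]] x.
have hM' := hM.
case: hM' => [sfn [mphi [mmu [dens [nphi _]]]]].
have Hh2 : (2 <= h.+1 <= H)%N by move: hh; lia.
set S := ereal_sup _.
have hS := reach h.+1 Hh2 x.
rewrite -/S in hS.
set nm := enorm (mu M h.+1 x) in hS.
have nm0 : 0 <= nm by exact: enorm_ge0.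
have dn : forall i, 0 <= occ_dens M (Psi i) h.+1 x.
  by move=> i; have [_ + _] := @dens_all _ _ _ _ _ H M hM h hh (Psi i) (hPsi i); apply.
have [d0|dpos] := posnP d.
- exfalso.
  have [[pi hpi]|nopi] := pselect (exists pi : nat -> T -> A -> R, markov_policy pi); last first.
    have S0 : S = -oo%E.
      rewrite /S (_ : [set _ | pi in markov_policy] = set0) ?ereal_sup0 //.
      by apply/seteqP; split => [y [pi hpi _]|y //]; exfalso; apply: nopi; exists pi.
    by move: hS; rewrite S0 leeNy_eq.
  have [[a _]|noa] := pselect (exists a : A, True); last first.
    have [_ [pi1 _]] := hpi.
    move: (pi1 1%N x); rewrite big1 => [/eqP|a _]; first by rewrite eq_sym oner_eq0.
    by exfalso; apply: noa; exists a.
  have z : forall u v : 'rV[R]_d, dotv u v = 0.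
    by move=> u v; rewrite /dotv big1 // => i _; move: (ltn_ord i); rewrite {2}d0.
  have := (dens h hh x a).2.
  under eq_integral do rewrite z.
  by rewrite integral0 => /(congr1 fine) /= /eqP; rewrite eq_sym oner_eq0.
pose i0 : 'I_d := Ordinal dpos.
set F := fun i => occ_dens M (Psi i) h.+1 x.
have [ist _ ismax] := @arg_maxP _ _ _ i0 predT F isT.
set m := F ist.
have LHSge : ((m)%:E <= \big[Order.max/-oo%E]_(i < d) (occ_dens M (Psi i) h.+1 x)%:E)%E.
  exact: (le_bigmax _ (fun i => (occ_dens M (Psi i) h.+1 x)%:E) ist).
have m0 : 0 <= m by exact: dn.
have C0 : 0 <= C by apply: le_trans C1.
have bnd : forall pi, markov_policy pi ->
    occ_dens M pi h.+1 x <= C * d%:R * m + eps * nm.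
  move=> pi hpi.
  have [beta [hb hr]] := hbary (featocc M pi h) (ex_intro2 _ _ pi hpi erefl).
  set r := featocc M pi h - _ in hr.
  have -> : occ_dens M pi h.+1 x =
      dotv (mu M h.+1 x) (\sum_(i < d) beta i *: featocc M (Psi i) h + r).
    by rewrite /r addrC subrK.
  rewrite dotvD dotv_sum; apply: lerD.
  + apply: (@le_trans _ _ (\sum_(i < d) C * m)).
      apply: ler_sum => i _.
      have := hb i => /andP[_ bC].
      have Fi : F i <= m by have := ismax i isT.
      apply: (@le_trans _ _ (C * F i)).
        by apply: ler_wpM2r; [exact: dn|].
      by apply: ler_wpM2l.
    by rewrite sumr_const card_ord (_ : C * m *+ d = C * d%:R * m) // -mulr_natr; ring.
  + apply: (le_trans (cauchy_schwarz _ _)).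
    by rewrite mulrC; apply: ler_wpM2r.
have hSup : (S <= (C * d%:R * m + eps * nm)%:E)%E.
  by apply: ub_ereal_sup => y [pi hpi <-]; rewrite lee_fin; exact: bnd.
apply: le_trans LHSge.
move: hS hSup; clearbody S; case: S => [s||] //=; last first.
rewrite !lee_fin => hs1 hs2.
have dR : 1 <= d%:R :> R by rewrite ler1n.
have e1 : eps * nm <= eta / 2 * nm by apply: ler_wpM2r.
have pos : 0 < 2 * d%:R * C by apply: mulr_gt0; [apply: mulr_gt0 => //; lra| lra].
rewrite mulrC ler_pdivrMr //.
nra.
Qed.
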